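(* Let $\mathbf{w}^t\in\mathbb{R}^d$, let $\theta_1^t\le\theta_2^t\le\dots\le\theta_{K-1}^t$ be real thresholds, let $\mathbf{x}^t\in\mathbb{R}^d$ and let $1\le y_l^t\le y_r^t\le K$ be integers. Let $(\mathbf{w}^{t+1},\boldsymbol\theta^{t+1})$ be the PA update, i.e. the unique minimizer over $\mathbf{w}\in\mathbb{R}^d,\boldsymbol\theta\in\mathbb{R}^{K-1}$ of $$\tfrac12\Vert\mathbf{w}-\mathbf{w}^t\Vert^2+\tfrac12\Vert\boldsymbol\theta-\boldsymbol\theta^t\Vert^2$$ subject to $\mathbf{w}\cdot\mathbf{x}^t-\theta_i\ge 1$ for $i=1,\dots,y_l^t-1$ and $\mathbf{w}\cdot\mathbf{x}^t-\theta_i\le -1$ for $i=y_r^t,\dots,K-1$. Then $\theta_1^{t+1}\le\theta_2^{t+1}\le\dots\le\theta_{K-1}^{t+1}$.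
   Context: Online ranking into $K$ ordered classes: a ranker is $(\mathbf{w},\boldsymbol\theta)$ with $\boldsymbol\theta=(\theta_1,\dots,\theta_{K-1})$, predicting $h(\mathbf{x})=\min\{i\in\{1,\dots,K\}:\mathbf{w}\cdot\mathbf{x}-\theta_i<0\}$ with $\theta_K=\infty$. At trial $t$ an example $\mathbf{x}^t$ with interval label $[y_l^t,y_r^t]$ is received and the passive-aggressive (PA) algorithm updates $(\mathbf{w}^t,\boldsymbol\theta^t)$ to the exact solution of the stated quadratic program. *)

(* Defs.v *)
From HB Require Import structures.
From mathcomp Require Import all_boot all_order all_algebra.
From mathcomp Require Import reals.
Set Implicit Arguments. Unset Strict Implicit. Unset Printing Implicit Defensive.
Import Order.TTheory GRing.Theory Num.Theory.
Local Open Scope ring_scope.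

Definition dotv (R : realType) (n : nat) (u v : 'rV[R]_n) : R :=
  \sum_(k < n) u 0 k * v 0 k.

Definition sqnorm (R : realType) (n : nat) (u : 'rV[R]_n) : R := dotv u u.

Definition pa_objective (R : realType) (d m : nat)
  (wt : 'rV[R]_d) (tht : 'rV[R]_m) (w : 'rV[R]_d) (th : 'rV[R]_m) : R :=
  2^-1 * sqnorm (w - wt) + 2^-1 * sqnorm (th - tht).

(* Thresholds theta_1..theta_{K-1} are stored 0-based: theta_i = th 0 j with i = j+1.
   Constraints: w.x - theta_i >= 1 for i = 1..yl-1,
                w.x - theta_i <= -1 for i = yr..K-1. *)
Definition pa_feasible (R : realType) (d K : nat) (x : 'rV[R]_d) (yl yr : nat)
  (w : 'rV[R]_d) (th : 'rV[R]_(K.-1)) : Prop :=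
  forall j : 'I_(K.-1),
    ((j.+1 <= yl - 1)%N -> dotv w x - th 0 j >= 1) /\
    ((yr <= j.+1)%N -> dotv w x - th 0 j <= -1).
Arguments pa_feasible {R d} K x yl yr w th.

Definition pa_update (R : realType) (d K : nat) (wt : 'rV[R]_d) (tht : 'rV[R]_(K.-1))
  (x : 'rV[R]_d) (yl yr : nat) (w' : 'rV[R]_d) (th' : 'rV[R]_(K.-1)) : Prop :=
  pa_feasible K x yl yr w' th' /\
  forall (w : 'rV[R]_d) (th : 'rV[R]_(K.-1)), pa_feasible K x yl yr w th ->
    pa_objective wt tht w' th' <= pa_objective wt tht w th.
Arguments pa_update {R d} K wt tht x yl yr w' th'.

Definition thresholds_sorted (R : realType) (m : nat) (th : 'rV[R]_m) : Prop :=
  forall i j : 'I_m, (i <= j)%N -> th 0 i <= th 0 j.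

(* Main.v *)
Require Import Defs.
From HB Require Import structures.
From mathcomp Require Import all_boot all_order all_algebra.
From mathcomp Require Import reals.
From mathcomp Require Import ring lra.
Import Order.TTheory GRing.Theory Num.Theory.
Local Open Scope ring_scope.

Lemma sum_diff2 (R : realType) n (F G : 'I_n -> R) (i j : 'I_n) :
  i != j -> (forall k, k != i -> k != j -> F k = G k) ->
  \sum_k F k = \sum_k G k + (F i + F j) - (G i + G j).
Proof.
move=> nij H.
have E : forall F : 'I_n -> R, \sum_k F k = F i + F j + \sum_(k | (k != i) && (k != j)) F k.
  move=> F0; rewrite (bigD1 i) //= (bigD1 j) /=; last by rewrite eq_sym.
  by rewrite addrA.
rewrite (E F) (E G) (eq_bigr G); last by move=> k /andP[H1 H2]; exact: H.
ring.
Qed.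

Lemma sqnormE (R : realType) n (u v : 'rV[R]_n) :
  sqnorm (u - v) = \sum_k (u 0 k - v 0 k) * (u 0 k - v 0 k).
Proof. by rewrite /sqnorm /dotv; apply: eq_bigr => k _; rewrite !mxE. Qed.

Theorem theorem1 (R : realType) (d K : nat)
  (wt : 'rV[R]_d) (tht : 'rV[R]_(K.-1)) (x : 'rV[R]_d) (yl yr : nat)
  (w' : 'rV[R]_d) (th' : 'rV[R]_(K.-1)) :
  thresholds_sorted tht ->
  (1 <= yl)%N -> (yl <= yr)%N -> (yr <= K)%N ->
  pa_update K wt tht x yl yr w' th' ->
  thresholds_sorted th'.
Proof.
move=> Hs _ _ _ [Hf Hmin] i j lij.
rewrite leNgt; apply/negP => Hlt.
have lij' : (i.+1 <= j.+1)%N by rewrite ltnS.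
have nij : i != j by apply/eqP => E; move: Hlt; rewrite E ltxx.
set a := th' 0 i in Hlt *; set b := th' 0 j in Hlt *.
set m := (a + b) / 2.
have ma : m < a by rewrite /m; lra.
have mb : b < m by rewrite /m; lra.
set th'' := \row_k (if (k == i) || (k == j) then m else th' 0 k).
have Hf' : pa_feasible K x yl yr w' th''.
  move=> k; rewrite /th'' mxE.
  have [ki|nki] := eqVneq k i.
    subst k => /=; have [H1 H2] := Hf i; split.
      by move=> /H1; rewrite -/a; lra.
    move=> Hy; have := (proj2 (Hf j)) (leq_trans Hy lij').
    by rewrite -/b; lra.
  have [kj|nkj] := eqVneq k j.
    subst k => /=; split.
      move=> Hy; have := (proj1 (Hf i)) (leq_trans lij' Hy).
      by rewrite -/a; lra.
    by move=> /(proj2 (Hf j)); rewrite -/b; lra.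
  by [].
have := Hmin w' th'' Hf'.
rewrite /pa_objective !sqnormE.
rewrite [X in _ <= _ + _ * X](@sum_diff2 _ _ _
   (fun k => (th' 0 k - tht 0 k) * (th' 0 k - tht 0 k)) i j nij); last first.
  by move=> k H1 H2; rewrite /th'' mxE (negbTE H1) (negbTE H2).
have ei : th'' 0 i = m by rewrite /th'' mxE eqxx.
have ej : th'' 0 j = m by rewrite /th'' mxE eqxx orbT.
rewrite ei ej -/a -/b.
have ti := Hs i j lij.
set ta := tht 0 i in ti *; set tb := tht 0 j in ti *.
set S := \sum_k _.
have key : 0 < (a - ta) * (a - ta) + (b - tb) * (b - tb)
   - ((m - ta) * (m - ta) + (m - tb) * (m - tb)).
  have -> : (a - ta) * (a - ta) + (b - tb) * (b - tb)
   - ((m - ta) * (m - ta) + (m - tb) * (m - tb)) =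
   (a - b) * (a - b) / 2 + (a - b) * (tb - ta).
    by rewrite /m; field.
  have h1 : 0 < (a - b) * (a - b) by apply: mulr_gt0; lra.
  have h2 : 0 <= (a - b) * (tb - ta) by apply: mulr_ge0; lra.
  lra.
lra.
Qed.
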